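(* Let $n\in\mathbb{N}$ and $d\geq 3$. There exists an injective map $\Phi:\mathcal{P}_{n,d}\to\mathcal{P}_{n(n+1),d-1}$ such that $$\Phi(\mathcal{J}^{\rm lin}_{n,d})=\mathcal{J}^{\rm lin}_{n(n+1),d-1;n}\cap \Phi(\mathcal{P}_{n,d}),\qquad \Phi(\mathcal{J}_{n,d})=\mathcal{J}_{n(n+1),d-1;n}\cap \Phi(\mathcal{P}_{n,d}).$$
   Context: A polynomial system is a map $F:\mathbb{C}^n\to\mathbb{C}^n$ all of whose coordinate functions $F_j$ are polynomials; $\mathcal{P}_n$ denotes the set of these, and $\mathcal{P}_{n,d}$ the subset with total degree $\max_j\deg F_j\leq d$. The Jacobian matrix is $J_F(z)=(\partial F_j/\partial z_i)_{1\le i,j\le n}$. $\mathcal{J}^{\rm lin}_{n}$ is the set of $F\in\mathcal{P}_n$ with $\det J_F(z)=c$ for a constant $c\in\mathbb{C}^\times$ (independent of $z$), and $\mathcal{J}_n$ is the set of $F\in\mathcal{P}_n$ that are bijective with polynomial inverse; $\mathcal{J}^{\rm lin}_{n,d}=\mathcal{J}^{\rm lin}_n\cap\mathcal{P}_{n,d}$, $\mathcal{J}_{n,d}=\mathcal{J}_n\cap\mathcal{P}_{n,d}$. Partial versions: for $0\le n'\le n$ write $z=(z_1,z_2)\in\mathbb{C}^{n'}\times\mathbb{C}^{n-n'}$ and $F=(F_1,F_2)$ accordingly, and set $R(z_2;z_1):=F_2(z_1,z_2)$, viewed as a polynomial system in the variables $z_2\in\mathbb{C}^{n-n'}$ depending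 on the parameters $z_1$. When for each $z_1$ the map $R(\cdot;z_1)$ is in $\mathcal{J}_{n-n'}$, denote by $R^{-1}(\cdot;z_1)$ its inverse, so $R^{-1}(R(z_2;z_1);z_1)=z_2$. - $\mathcal{J}_{n,d;n'}$ is the set of $F\in\mathcal{P}_{n,d}$ such that $R(\cdot;z_1)\in\mathcal{J}_{n-n'}$ for all $z_1\in\mathbb{C}^{n'}$, and such that $F$ restricted to $F^{-1}(\mathbb{C}^{n'}\times\{0\})$ is a bijection onto $\mathbb{C}^{n'}\times\{0\}$ whose inverse $y_1\mapsto F^{-1}(y_1,0)$ is a polynomial map $\mathbb{C}^{n'}\to\mathbb{C}^{n}$. - $\mathcal{J}^{\rm lin}_{n,d;n'}$ is the set of $F\in\mathcal{P}_{n,d}$ such that $R(\cdot;z_1)\in\mathcal{J}_{n-n'}$ for all $z_1\in\mathbb{C}^{n'}$ and there is a constant $c\in\mathbb{C}^\times$ with $\det J_F(z_1,R^{-1}(0;z_1))=c$ for all $z_1\in\mathbb{C}^{n'}$. Here the dimension $n(n+1)$ is split as $n'=n$ first coordinates and $n^2$ remaining coordinates. *)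

(* Defs.v *)
From HB Require Import structures.
From mathcomp Require Import all_boot all_order all_algebra.
Set Implicit Arguments. Unset Strict Implicit. Unset Printing Implicit Defensive.
Import Order.TTheory GRing.Theory Num.Theory.
Local Open Scope ring_scope.

(* Points of K^k are row vectors 'rV[K]_k; z 0 i is the i-th coordinate. *)

Definition poly_fun_deg (K : fieldType) (k d : nat) (f : 'rV[K]_k -> K) : Prop :=
  exists c : {ffun 'I_k -> 'I_d.+1} -> K,
    (forall a : {ffun 'I_k -> 'I_d.+1}, (d < \sum_(i < k) (a i : nat))%N -> c a = 0) /\
    forall z, f z = \sum_(a : {ffun 'I_k -> 'I_d.+1}) c a * \prod_(i < k) z 0 i ^+ a i.

Definition polymap_deg (K : fieldType) (k l d : nat) (F : 'rV[K]_k -> 'rV[K]_l) : Prop :=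
  forall j : 'I_l, poly_fun_deg d (fun z => F z 0 j).

Definition polymap (K : fieldType) (k l : nat) (F : 'rV[K]_k -> 'rV[K]_l) : Prop :=
  exists d, polymap_deg d F.

Definition Pnd (K : fieldType) (k d : nat) (F : 'rV[K]_k -> 'rV[K]_k) : Prop :=
  polymap_deg d F.

Definition is_dpartial (K : fieldType) (k : nat) (f : 'rV[K]_k -> K)
    (i : 'I_k) (z : 'rV[K]_k) (v : K) : Prop :=
  exists p : {poly K},
    (forall t, p.[t] = f (z + t *: delta_mx 0 i)) /\ (p^`()).[0] = v.

Definition jac_det_is (K : fieldType) (k : nat) (F : 'rV[K]_k -> 'rV[K]_k)
    (z : 'rV[K]_k) (c : K) : Prop :=
  exists M : 'M[K]_k,
    (forall i j, is_dpartial (fun w => F w 0 j) i z (M i j)) /\ \det M = c.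

Definition Jlin (K : fieldType) (k : nat) (F : 'rV[K]_k -> 'rV[K]_k) : Prop :=
  polymap F /\ exists c : K, c != 0 /\ forall z, jac_det_is F z c.

Definition Jinv (K : fieldType) (k : nat) (F : 'rV[K]_k -> 'rV[K]_k) : Prop :=
  polymap F /\ exists G : 'rV[K]_k -> 'rV[K]_k,
    polymap G /\ cancel F G /\ cancel G F.

Definition Jlin_nd (K : fieldType) (k d : nat) (F : 'rV[K]_k -> 'rV[K]_k) : Prop :=
  Pnd d F /\ Jlin F.
Definition Jinv_nd (K : fieldType) (k d : nat) (F : 'rV[K]_k -> 'rV[K]_k) : Prop :=
  Pnd d F /\ Jinv F.

(* Partial versions on K^(n' + m) = K^n' x K^m, z = row_mx z1 z2.
   R(z2; z1) := F2(z1, z2). *)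
Definition Rpart (K : fieldType) (n' m : nat) (F : 'rV[K]_(n' + m) -> 'rV[K]_(n' + m))
    (z1 : 'rV[K]_n') : 'rV[K]_m -> 'rV[K]_m :=
  fun z2 => rsubmx (F (row_mx z1 z2)).

Definition Jinv_part (K : fieldType) (n' m d : nat)
    (F : 'rV[K]_(n' + m) -> 'rV[K]_(n' + m)) : Prop :=
  [/\ Pnd d F,
      (forall z1, Jinv (Rpart F z1)) &
      (* F restricted to F^{-1}(K^n' x {0}) is a bijection onto K^n' x {0},
         with polynomial inverse y1 |-> F^{-1}(y1, 0) *)
      exists G : 'rV[K]_n' -> 'rV[K]_(n' + m),
        [/\ polymap G,
            (forall y1, F (G y1) = row_mx y1 0) &
            (forall y1 z, F z = row_mx y1 0 -> z = G y1)]].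

(* J^lin_{n,d;n'}: det J_F(z1, R^{-1}(0;z1)) = c, where R^{-1}(0;z1) is the
   unique z2 with R(z2;z1) = 0. *)
Definition Jlin_part (K : fieldType) (n' m d : nat)
    (F : 'rV[K]_(n' + m) -> 'rV[K]_(n' + m)) : Prop :=
  [/\ Pnd d F,
      (forall z1, Jinv (Rpart F z1)) &
      exists c : K, c != 0 /\
        forall z1 z2, Rpart F z1 z2 = 0 -> jac_det_is F (row_mx z1 z2) c].

(* Main.v *)
Require Import Defs.
From HB Require Import structures.
From mathcomp Require Import all_boot all_order all_algebra ring zify.
From Stdlib Require Import ClassicalEpsilon FunctionalExtensionality.
Import GRing.Theory Num.Theory.
Local Open Scope ring_scope.
Set Implicit Arguments. Unset Strict Implicit. Unset Printing Implicit Defensive.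

Section PFD.
Variable K : fieldType.

Definition ev k (L : seq (K * seq 'I_k)) (v : 'rV[K]_k) : K :=
  \sum_(p <- L) p.1 * \prod_(x <- p.2) v 0 x.

Definition PFD k d (f : 'rV[K]_k -> K) :=
  exists L : seq (K * seq 'I_k), all (fun p => size p.2 <= d)%N L /\ forall v, f v = ev L v.

Lemma prod_count (I : finType) (s : seq I) (f : I -> K) :
  \prod_(x <- s) f x = \prod_i f i ^+ count_mem i s.
Proof.
elim: s => [|x s IH]; first by rewrite big_nil big1 // => i _; rewrite expr0.
rewrite big_cons IH /=.
under [RHS]eq_bigr do rewrite exprD.
rewrite big_split /=; congr (_ * _).
rewrite (bigD1 x) //= eqxx expr1 big1 ?mulr1 // => i /negbTE.
by rewrite eq_sym => ->; rewrite expr0.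
Qed.

Lemma sum_count (I : finType) (s : seq I) :
  (\sum_i count_mem i s)%N = size s.
Proof.
elim: s => [|x s IH]; first by rewrite big1.
rewrite /= big_split /= IH (bigD1 x) //= eqxx big1 // => i /negbTE.
by rewrite eq_sym => ->.
Qed.

Lemma pfd_PFD k d (f : 'rV[K]_k -> K) : poly_fun_deg d f -> PFD d f.
Proof.
case=> c [hc hf].
pose mono (a : {ffun 'I_k -> 'I_d.+1}) : seq 'I_k :=
  flatten [seq nseq (a i) i | i <- enum 'I_k].
have pm a (v : 'rV[K]_k) : \prod_(x <- mono a) v 0 x = \prod_i v 0 i ^+ a i.
  rewrite big_flatten /= big_map big_enum /=; apply: eq_bigr => i _.
  by rewrite big_nseq iter_mulr_1.
have sm a : size (mono a) = (\sum_i (a i : nat))%N.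
  rewrite size_flatten /shape -map_comp sumnE big_map big_enum /=.
  by apply: eq_bigr => i _; rewrite /= size_nseq.
exists [seq (c a, if (\sum_i (a i : nat) <= d)%N then mono a else [::]) | a <- enum {ffun 'I_k -> 'I_d.+1}].
split.
  rewrite all_map; apply/allP => a _ /=; case: ifP => [h|_] //; by rewrite sm.
move=> v; rewrite hf /ev big_map big_enum /=; apply: eq_bigr => a _.
case: ifP => h; first by rewrite pm.
by rewrite hc ?mul0r // ltnNge h.
Qed.

Lemma PFD_pfd k d (f : 'rV[K]_k -> K) : PFD d f -> poly_fun_deg d f.
Proof.
case=> L [hL hf].
pose exps (s : seq 'I_k) : {ffun 'I_k -> 'I_d.+1} := [ffun i => inord (count_mem i s)].
have ee p i : p \in L -> (exps p.2 i : nat) = count_mem i p.2.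
  move=> pL; rewrite ffunE inordK // ltnS.
  by apply: leq_trans (count_size _ _) _; exact: (allP hL p pL).
exists (fun a => \sum_(p <- L | exps p.2 == a) p.1); split.
  move=> a ha; rewrite big_seq_cond big1 // => p /andP [pL /eqP ea].
  move: ha; rewrite -ea (eq_bigr (fun i => count_mem i p.2)); last by move=> i _; rewrite ee.
  by rewrite sum_count ltnNge (allP hL p pL).
move=> v; rewrite hf /ev.
under [RHS]eq_bigr do rewrite big_distrl /=.
under [RHS]eq_bigr do rewrite big_mkcond /=.
rewrite [RHS]exchange_big /= big_seq [RHS]big_seq.
apply: eq_bigr => p pL.
rewrite -big_mkcond /= (big_pred1 (exps p.2)); last by move=> a; rewrite eq_sym.
rewrite prod_count; congr (_ * _); apply: eq_bigr => i _; by rewrite ee.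
Qed.


Lemma PFD_ext k d (f g : 'rV[K]_k -> K) : f =1 g -> PFD d f -> PFD d g.
Proof. by move=> e [L [h1 h2]]; exists L; split => // v; rewrite -e. Qed.

Lemma PFD_le k d e (f : 'rV[K]_k -> K) : (d <= e)%N -> PFD d f -> PFD e f.
Proof.
move=> le [L [h1 h2]]; exists L; split => //.
by apply/allP => p pL; apply: leq_trans le; exact: (allP h1).
Qed.

Lemma ev_cons k p L (v : 'rV[K]_k) : ev (p :: L) v = p.1 * \prod_(x <- p.2) v 0 x + ev L v.
Proof. by rewrite /ev big_cons. Qed.

Lemma ev_nil k (v : 'rV[K]_k) : ev [::] v = 0.
Proof. by rewrite /ev big_nil. Qed.

Lemma PFD_const k (c : K) : PFD 0 (fun _ : 'rV[K]_k => c).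
Proof. by exists [:: (c, [::])]; split => // v; rewrite ev_cons ev_nil big_nil mulr1 addr0. Qed.

Lemma PFD_coord k (i : 'I_k) : PFD 1 (fun v : 'rV[K]_k => v 0 i).
Proof. by exists [:: (1, [:: i])]; split => // v; rewrite ev_cons ev_nil big_cons big_nil mulr1 mul1r addr0. Qed.

Lemma PFD_add k d (f g : 'rV[K]_k -> K) : PFD d f -> PFD d g -> PFD d (fun v => f v + g v).
Proof.
move=> [L1 [a1 h1]] [L2 [a2 h2]]; exists (L1 ++ L2); split; first by rewrite all_cat a1.
by move=> v; rewrite h1 h2 /ev big_cat.
Qed.

Lemma PFD_scale k d c (f : 'rV[K]_k -> K) : PFD d f -> PFD d (fun v => c * f v).
Proof.
move=> [L [a h]]; exists [seq (c * p.1, p.2) | p <- L]; split; first by rewrite all_map; exact: a.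
by move=> v; rewrite h /ev big_map big_distrr; apply: eq_bigr => p _; exact: mulrA.
Qed.

Lemma PFD_mul k d e (f g : 'rV[K]_k -> K) : PFD d f -> PFD e g -> PFD (d + e) (fun v => f v * g v).
Proof.
move=> [L1 [a1 h1]] [L2 [a2 h2]].
exists [seq (p.1 * q.1, p.2 ++ q.2) | p <- L1, q <- L2]; split.
  apply/allP => x /allpairsP [[p q] /= [pL qL ->]] /=.
  by rewrite size_cat leq_add //; [exact: (allP a1) | exact: (allP a2)].
move=> v; rewrite h1 h2 /ev big_distrlr /=.
rewrite big_allpairs_dep /=.
apply: eq_bigr => p _; apply: eq_bigr => q _ /=.
by rewrite big_cat /= mulrACA.
Qed.

Lemma PFD_sub k d (f g : 'rV[K]_k -> K) : PFD d f -> PFD d g -> PFD d (fun v => f v - g v).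
Proof.
move=> hf hg; apply: PFD_ext (PFD_add hf (PFD_scale (-1) hg)) => v.
by rewrite mulN1r.
Qed.

Lemma polymap_PFD k l (F : 'rV[K]_k -> 'rV[K]_l) :
  (forall j, exists d, PFD d (fun v => F v 0 j)) -> polymap F.
Proof.
move=> h; have [D hD] := fin_all_exists h.
exists (\max_j D j) => j; apply: PFD_pfd; apply: PFD_le (hD j).
exact: leq_bigmax.
Qed.

Lemma PFD_polymap k l (F : 'rV[K]_k -> 'rV[K]_l) :
  polymap F -> forall j, exists d, PFD d (fun v => F v 0 j).
Proof. by case=> d h j; exists d; apply: pfd_PFD. Qed.

End PFD.

Section Grad.
Variable K : numFieldType.

Definition has_grad k (f : 'rV[K]_k -> K) (P g : 'rV[K]_k) :=
  forall a b : 'rV[K]_k, exists p : {poly K},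
    (forall t, p.[t] = f (P + t *: a + (t * t) *: b)) /\
    p^`().[0] = \sum_m a 0 m * g 0 m.

Lemma hg_ext k (f f' : 'rV[K]_k -> K) P g : f =1 f' -> has_grad f P g -> has_grad f' P g.
Proof.
move=> e h a b; have [p [h1 h2]] := h a b; exists p; split => // t.
by rewrite h1 e.
Qed.

Lemma hg_at0 k (f : 'rV[K]_k -> K) P a b (p : {poly K}) :
  (forall t, p.[t] = f (P + t *: a + (t * t) *: b)) -> p.[0] = f P.
Proof. by move=> h; rewrite h mul0r !scale0r !addr0. Qed.

Lemma sum_delta k (a : 'rV[K]_k) i :
  \sum_m a 0 m * (delta_mx 0 i : 'rV[K]_k) 0 m = a 0 i.
Proof.
rewrite (bigD1 i) //= big1 => [|m /negbTE ne]; rewrite !mxE ?eqxx ?ne /=.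
  by rewrite mulr1 addr0.
by rewrite mulr0.
Qed.

Lemma hg_const k c (P : 'rV[K]_k) : has_grad (fun _ => c) P 0.
Proof.
move=> a b; exists c%:P; split => [t|]; first by rewrite hornerC.
by rewrite derivC horner0 big1 // => m _; rewrite mxE mulr0.
Qed.

Lemma hg_coord k i (P : 'rV[K]_k) : has_grad (fun v => v 0 i) P (delta_mx 0 i).
Proof.
move=> a b; exists ((P 0 i)%:P + a 0 i *: 'X + b 0 i *: ('X * 'X)); split.
  by move=> t; rewrite !(hornerD, hornerZ, hornerX, hornerC, hornerM) !mxE; ring.
by rewrite sum_delta !derivE !(hornerD, hornerZ, hornerX, hornerC, hornerM); ring.
Qed.

Lemma hg_add k (f h : 'rV[K]_k -> K) P g1 g2 :
  has_grad f P g1 -> has_grad h P g2 -> has_grad (fun v => f v + h v) P (g1 + g2).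
Proof.
move=> H1 H2 a b; have [p1 [e1 d1]] := H1 a b; have [p2 [e2 d2]] := H2 a b.
exists (p1 + p2); split; first by move=> t; rewrite hornerD e1 e2.
rewrite derivD hornerD d1 d2 -big_split /=; apply: eq_bigr => m _.
by rewrite mxE mulrDr.
Qed.

Lemma hg_sub k (f h : 'rV[K]_k -> K) P g1 g2 :
  has_grad f P g1 -> has_grad h P g2 -> has_grad (fun v => f v - h v) P (g1 - g2).
Proof.
move=> H1 H2 a b; have [p1 [e1 d1]] := H1 a b; have [p2 [e2 d2]] := H2 a b.
exists (p1 - p2); split; first by move=> t; rewrite hornerD hornerN e1 e2.
rewrite derivB hornerD hornerN d1 d2 -sumrN -big_split /=; apply: eq_bigr => m _.
by rewrite !mxE mulrDr mulrN.
Qed.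

Lemma hg_mul k (f h : 'rV[K]_k -> K) P g1 g2 :
  has_grad f P g1 -> has_grad h P g2 ->
  has_grad (fun v => f v * h v) P (f P *: g2 + h P *: g1).
Proof.
move=> H1 H2 a b; have [p1 [e1 d1]] := H1 a b; have [p2 [e2 d2]] := H2 a b.
exists (p1 * p2); split; first by move=> t; rewrite hornerM e1 e2.
rewrite derivM hornerD !hornerM d1 d2 (hg_at0 e1) (hg_at0 e2).
rewrite big_distrl big_distrr -big_split /=; apply: eq_bigr => m _.
rewrite !mxE; ring.
Qed.

Lemma hg_prod k (s : seq 'I_k) P : exists g, has_grad (fun v : 'rV[K]_k => \prod_(x <- s) v 0 x) P g.
Proof.
elim: s => [|x s [g IH]].
  by exists 0; apply: hg_ext (hg_const 1 P) => v; rewrite big_nil.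
exists ((P 0 x) *: g + (\prod_(y <- s) P 0 y) *: delta_mx 0 x).
by apply: hg_ext (hg_mul (hg_coord x P) IH) => v; rewrite big_cons.
Qed.

Lemma hg_ev k (L : seq (K * seq 'I_k)) P : exists g, has_grad (ev L) P g.
Proof.
elim: L => [|p L [g IH]].
  by exists 0; apply: hg_ext (hg_const 0 P) => v; rewrite ev_nil.
have [g1 h1] := hg_prod p.2 P.
have := hg_add (hg_mul (hg_const p.1 P) h1) IH.
by move=> H; eexists; apply: hg_ext H => v; rewrite ev_cons.
Qed.

Lemma hg_PFD k d (f : 'rV[K]_k -> K) P : PFD d f -> exists g, has_grad f P g.
Proof.
case=> L [_ e]; have [g h] := hg_ev L P; exists g.
by apply: hg_ext h => v; rewrite e.
Qed.

Lemma poly_fun_inj (p q : {poly K}) : (forall t, p.[t] = q.[t]) -> p = q.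
Proof.
move=> e; apply/eqP; rewrite -subr_eq0; apply/negPn/negP => nz.
suff: (size [seq i%:R : K | i <- iota 0 (size (p - q)%R)] < size (p - q)%R)%N.
  by rewrite size_map size_iota ltnn.
apply: (max_poly_roots nz).
  by apply/allP => x _; rewrite /root hornerD hornerN e subrr.
rewrite map_inj_uniq ?iota_uniq // => x y /eqP; rewrite eqr_nat => /eqP.
done.
Qed.

Lemma dpartial_uniq k (f : 'rV[K]_k -> K) i z v v' :
  is_dpartial f i z v -> is_dpartial f i z v' -> v = v'.
Proof.
move=> [p [e1 d1]] [q [e2 d2]].
have epq : p = q by apply: poly_fun_inj => t; rewrite e1 e2.
by rewrite -d1 -d2 epq.
Qed.

Lemma hg_dpartial k (f : 'rV[K]_k -> K) P g i :
  has_grad f P g -> is_dpartial f i P (g 0 i).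
Proof.
move=> h; have [p [e d]] := h (delta_mx 0 i) 0.
exists p; split; first by move=> t; rewrite e scaler0 addr0.
by rewrite d (eq_bigr (fun m => g 0 m * (delta_mx 0 i : 'rV[K]_k) 0 m)) ?sum_delta // => m _; rewrite mulrC.
Qed.

End Grad.

Lemma schur (R : comNzRingType) m1 m2 (A : 'M[R]_m1) (B : 'M[R]_(m1, m2)) (C : 'M[R]_(m2, m1)) :
  \det (block_mx A (- B) C 1%:M) = \det (A + B *m C).
Proof.
have -> : block_mx A (- B) C 1%:M =
  block_mx 1%:M (- B) 0 1%:M *m block_mx (A + B *m C) 0 C 1%:M.
  rewrite mulmx_block !mul1mx !mul0mx !mulmx1 !add0r ?addr0 mulNmx.
  by rewrite addrK.
rewrite det_mulmx det_ublock det_lblock (det1 R m1) (det1 R m2); ring.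
Qed.

Section Main.
Variable K : numClosedFieldType.
Variables n d : nat.
Hypothesis hd : (3 <= d)%N.
Local Notation N := (n * n)%N.

Definition pi (l : 'I_N) : 'I_n * 'I_n := enum_val (cast_ord (esym (mxvec_cast n n)) l).

Lemma pi_idx x y : pi (mxvec_index x y) = (x, y).
Proof. by rewrite /pi /mxvec_index cast_ordK enum_rankK. Qed.

Definition q (z : 'rV[K]_n) : 'rV[K]_N := \row_l (z 0 (pi l).1 * z 0 (pi l).2).

Definition emb (z : 'rV[K]_n) : 'rV[K]_(n + N) := row_mx z (q z).

Definition Tr (s : seq 'I_n) : seq 'I_(n + N) :=
  if (size s < d)%N then map (lshift N) s else
  match s with
  | x :: y :: r => rshift n (mxvec_index x y) :: map (lshift N) r
  | _ => map (lshift N) s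
  end.

Lemma Tr_ev s z : \prod_(x <- Tr s) emb z 0 x = \prod_(x <- s) z 0 x.
Proof.
have hm r : \prod_(x <- map (lshift N) r) emb z 0 x = \prod_(x <- r) z 0 x.
  by rewrite big_map; apply: eq_bigr => x _; rewrite /emb row_mxEl.
rewrite /Tr; case: ifP => _; first exact: hm.
case: s => [|x [|y r]]; try exact: hm.
rewrite big_cons hm /emb row_mxEr /q mxE pi_idx /= !big_cons mulrA.
by [].
Qed.

Lemma Tr_size s : (size s <= d)%N -> (size (Tr s) <= d.-1)%N.
Proof.
rewrite /Tr; case: ifP => h1 h2; first by rewrite size_map; move: h1 hd; clear; lia.
move/negbT: h1; rewrite -leqNgt => h1.
case: s h1 h2 => [|x [|y r]] /= h1 h2; try (move: h1 hd; clear; lia).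
by rewrite size_map; move: h2 hd; clear; lia.
Qed.

Definition specL (f : 'rV[K]_n -> K) (L : seq (K * seq 'I_n)) :=
  all (fun p => size p.2 <= d)%N L /\ forall z, f z = ev L z.

Definition repr (f : 'rV[K]_n -> K) : seq (K * seq 'I_n) :=
  epsilon (inhabits [::]) (specL f).

Lemma repr_spec (f : 'rV[K]_n -> K) : PFD d f -> specL f (repr f).
Proof. by move=> [L hL]; apply: (epsilon_spec (inhabits [::]) (specL f)); exists L. Qed.

Definition Lt (F : 'rV[K]_n -> 'rV[K]_n) j :=
  [seq (p.1, Tr p.2) | p <- repr (fun z => F z 0 j)].

Definition Phi (F : 'rV[K]_n -> 'rV[K]_n) : 'rV[K]_(n + N) -> 'rV[K]_(n + N) :=
  fun v => row_mx (\row_j ev (Lt F j) v) (rsubmx v - q (lsubmx v)).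

Lemma Phi_row F z1 z2 :
  Phi F (row_mx z1 z2) = row_mx (\row_j ev (Lt F j) (row_mx z1 z2)) (z2 - q z1).
Proof. by rewrite /Phi row_mxKl row_mxKr. Qed.

Lemma Phi_emb F z : Pnd d F -> Phi F (emb z) = row_mx (F z) 0.
Proof.
move=> hF; rewrite /emb Phi_row subrr; congr row_mx; apply/rowP => j.
rewrite mxE /Lt /ev big_map.
have [_ ->] := repr_spec (pfd_PFD (hF j)).
by apply: eq_bigr => p _; rewrite Tr_ev.
Qed.

Lemma Phi_zero F z1 z2 y : Pnd d F -> Phi F (row_mx z1 z2) = row_mx y 0 ->
  z2 = q z1 /\ F z1 = y.
Proof.
move=> hF e; have [_ e2] := eq_row_mx (esym (etrans (esym (Phi_row F z1 z2)) e)).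
have ez : z2 = q z1 by apply: subr0_eq; rewrite -e2.
split => //; move: e; rewrite ez -/(emb z1) Phi_emb //.
by case/eq_row_mx.
Qed.

Lemma Phi_deg F : Pnd d F -> Pnd d.-1 (Phi F).
Proof.
move=> hF j; apply: PFD_pfd; rewrite -(splitK j); case: (split j) => /= j'.
- apply: (@PFD_ext _ _ _ (ev (Lt F j'))); first by move=> v; rewrite /Phi row_mxEl mxE.
  have [hs _] := repr_spec (pfd_PFD (hF j')).
  exists (Lt F j'); split => //; rewrite /Lt all_map; apply/allP => p pL /=.
  exact: Tr_size (allP hs p pL).
- have e1 : (1 <= d.-1)%N by case: d hd => [|[|[|]]].
  have e2 : (1 + 1 <= d.-1)%N by case: d hd => [|[|[|]]].
  apply: (@PFD_ext _ _ _ (fun v => v 0 (rshift n j') - v 0 (lshift N (pi j').1) * v 0 (lshift N (pi j').2))).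
    by move=> v; rewrite /Phi row_mxEr !mxE.
  apply: PFD_sub; first exact: PFD_le e1 (PFD_coord _ _).
  exact: PFD_le e2 (PFD_mul (PFD_coord _ _) (PFD_coord _ _)).
Qed.

Lemma Phi_inj F G : Pnd d F -> Pnd d G -> Phi F = Phi G -> F = G.
Proof.
move=> hF hG e; apply: functional_extensionality => z.
have := Phi_emb z hF; rewrite e Phi_emb //.
by case/eq_row_mx.
Qed.


Lemma Rpart_Phi F z1 z2 : Rpart (Phi F) z1 z2 = z2 - q z1.
Proof. by rewrite /Rpart Phi_row row_mxKr. Qed.

Lemma Rpart_Jinv F z1 : Jinv (Rpart (Phi F) z1).
Proof.
split.
  apply: polymap_PFD => l; exists 1%N.
  apply: PFD_ext (PFD_sub (PFD_coord _ l) (PFD_le (leq0n _) (PFD_const _ (q z1 0 l)))) => //.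
  by move=> v; rewrite Rpart_Phi !mxE.
exists (fun w => w + q z1); split.
  apply: polymap_PFD => l; exists 1%N.
  apply: PFD_ext (PFD_add (PFD_coord _ l) (PFD_le (leq0n _) (PFD_const _ (q z1 0 l)))) => //.
  by move=> v; rewrite !mxE.
by split => w; rewrite ?Rpart_Phi ?addrK ?subrK.
Qed.

Lemma jinv_fwd F : Pnd d F -> Jinv F -> Jinv_part d.-1 (Phi F).
Proof.
move=> hF [_ [G [pG [c1 c2]]]]; split; [exact: Phi_deg | exact: Rpart_Jinv |].
exists (fun y => emb (G y)); split.
- apply: polymap_PFD => j; have hG := PFD_polymap pG.
  rewrite -(splitK j); case: (split j) => /= j'.
  + have [e he] := hG j'; exists e; apply: PFD_ext he => v; by rewrite /emb row_mxEl.
  + have [e1 h1] := hG (pi j').1; have [e2 h2] := hG (pi j').2.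
    exists (e1 + e2)%N; apply: PFD_ext (PFD_mul h1 h2) => v; by rewrite /emb row_mxEr mxE.
- by move=> y1; rewrite Phi_emb // c2.
- move=> y1 z; rewrite -[z]hsubmxK => e; have [ez ef] := Phi_zero hF e.
  by rewrite ez -ef c1.
Qed.

Lemma jinv_bwd F : Pnd d F -> Jinv_part d.-1 (Phi F) -> Jinv F.
Proof.
move=> hF [_ _ [G [pG e1 e2]]]; split; first by exists d.
exists (fun y => lsubmx (G y)); split.
  apply: polymap_PFD => j; have [e he] := PFD_polymap pG (lshift N j).
  by exists e; apply: PFD_ext he => v; rewrite mxE.
split.
  move=> z; have := e2 (F z) (emb z) (Phi_emb z hF) => <-.
  by rewrite row_mxKl.
move=> y; have [_ h] := Phi_zero hF (etrans (congr1 (Phi F) (hsubmxK (G y))) (e1 y)).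
exact: h.
Qed.

Definition Dq (z : 'rV[K]_n) : 'M[K]_(n, N) :=
  \matrix_(i, l) (((pi l).1 == i)%:R * z 0 (pi l).2 + z 0 (pi l).1 * ((pi l).2 == i)%:R).

Definition R2 : 'M[K]_(n, N) :=
  \matrix_(i, l) (((pi l).1 == i)%:R * ((pi l).2 == i)%:R).

Lemma curve z i t :
  emb (z + t *: delta_mx 0 i) =
  emb z + t *: row_mx (delta_mx 0 i) (row i (Dq z)) + (t * t) *: row_mx 0 (row i R2).
Proof.
rewrite /emb !scale_row_mx !add_row_mx scaler0 addr0; congr row_mx.
apply/rowP => l; rewrite !mxE /=. ring.
Qed.

Lemma jac_equiv F z c : Pnd d F ->
  (jac_det_is F z c <-> jac_det_is (Phi F) (emb z) c).
Proof.
move=> hF; set P := emb z.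
have gF : forall j : 'I_n, exists g, has_grad (fun v => Phi F v 0 (lshift N j)) P g.
  move=> j; apply: (@hg_PFD _ _ d.-1); apply: pfd_PFD; exact: Phi_deg hF (lshift N j).
have [gF' hgF] := fin_all_exists gF.
pose gq l : 'rV[K]_(n + N) := delta_mx 0 (rshift n l) -
  (P 0 (lshift N (pi l).1) *: delta_mx 0 (lshift N (pi l).2) +
   P 0 (lshift N (pi l).2) *: delta_mx 0 (lshift N (pi l).1)).
have hgq : forall l, has_grad (fun v => Phi F v 0 (rshift n l)) P (gq l).
  move=> l; apply: hg_ext (hg_sub (hg_coord _ P) (hg_mul (hg_coord _ P) (hg_coord _ P))) => v.
  by rewrite /Phi row_mxEr !mxE.
pose A : 'M[K]_n := \matrix_(i, j) gF' j 0 (lshift N i).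
pose C : 'M[K]_(N, n) := \matrix_(l, j) gF' j 0 (rshift n l).
pose M := block_mx A (- Dq z) C 1%:M.
have hM : forall k j, is_dpartial (fun w => Phi F w 0 j) k P (M k j).
  move=> k j; rewrite -(splitK k) -(splitK j).
  case: (split k) => k'; case: (split j) => j' /=.
  - by rewrite block_mxEul mxE; exact: hg_dpartial (hgF j').
  - rewrite block_mxEur; have -> : (- Dq z) k' j' = gq j' 0 (lshift N k').
      rewrite /gq /P /emb !row_mxEl !mxE !eq_shift /= !(eq_sym k').
      ring.
    exact: hg_dpartial (hgq j').
  - by rewrite block_mxEdl mxE; exact: hg_dpartial (hgF j').
  - rewrite block_mxEdr; have -> : (1%:M : 'M[K]_N) k' j' = gq j' 0 (rshift n k').
      rewrite /gq /P /emb !row_mxEl !mxE !eq_shift /=.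
      ring.
    exact: hg_dpartial (hgq j').
pose Jm := row_mx 1%:M (Dq z) *m col_mx A C.
have hJ : forall i j, is_dpartial (fun w => F w 0 j) i z (Jm i j).
  move=> i j.
  have [p [e dp]] := hgF j (row_mx (delta_mx 0 i) (row i (Dq z))) (row_mx 0 (row i R2)).
  exists p; split.
    by move=> t; rewrite e /P -curve Phi_emb // row_mxEl.
  rewrite dp /Jm mul_row_col mul1mx !mxE big_split_ord /=; congr (_ + _).
    rewrite (eq_bigr (fun m => gF' j 0 (lshift N m) * (delta_mx 0 i : 'rV[K]_n) 0 m)).
      by rewrite (eq_bigr (fun m => (\row_m gF' j 0 (lshift N m)) 0 m * (delta_mx 0 i : 'rV[K]_n) 0 m)) ?sum_delta ?mxE // => m _; rewrite mxE.
    by move=> m _; rewrite row_mxEl mulrC.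
  by apply: eq_bigr => l _; rewrite row_mxEr !mxE.
have hdet : \det M = \det Jm by rewrite /Jm mul_row_col mul1mx schur.
split.
  move=> [M' [hM' dM']]; exists M; split => //; rewrite hdet -dM'; congr (\det _).
  by apply/matrixP => i j; exact: dpartial_uniq (hJ i j) (hM' i j).
move=> [M' [hM' dM']]; exists Jm; split => //; rewrite -hdet -dM'; congr (\det _).
by apply/matrixP => k j; exact: dpartial_uniq (hM k j) (hM' k j).
Qed.

Lemma jlin_fwd F : Pnd d F -> Jlin F -> Jlin_part d.-1 (Phi F).
Proof.
move=> hF [_ [c [c0 hc]]]; split; [exact: Phi_deg | exact: Rpart_Jinv |].
exists c; split => // z1 z2; rewrite Rpart_Phi => e.
have -> : z2 = q z1 by apply: subr0_eq.
by apply/(jac_equiv _ _ hF).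
Qed.

Lemma jlin_bwd F : Pnd d F -> Jlin_part d.-1 (Phi F) -> Jlin F.
Proof.
move=> hF [_ _ [c [c0 hc]]]; split; first by exists d.
exists c; split => // z; apply/(jac_equiv _ _ hF); apply: hc.
by rewrite Rpart_Phi subrr.
Qed.

End Main.

Unset Implicit Arguments.

Theorem mainTheorem1 (K : numClosedFieldType) (n d : nat) (hd : (3 <= d)%N) :
  exists Phi : ('rV[K]_n -> 'rV[K]_n) -> ('rV[K]_(n + n * n) -> 'rV[K]_(n + n * n)),
    [/\ (forall F, Pnd d F -> Pnd d.-1 (Phi F)),
        (forall F G, Pnd d F -> Pnd d G -> Phi F = Phi G -> F = G),
        (forall H, (exists F, Jlin_nd d F /\ H = Phi F) <->
                   (Jlin_part d.-1 H /\ exists F, Pnd d F /\ H = Phi F)) &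
        (forall H, (exists F, Jinv_nd d F /\ H = Phi F) <->
                   (Jinv_part d.-1 H /\ exists F, Pnd d F /\ H = Phi F))].
Proof.
exists (@Phi K n d); split.
- by move=> F hF; apply: Phi_deg.
- by move=> F G hF hG; apply: Phi_inj.
- move=> H; split.
  + by case=> F [[hF hJ] ->]; split; [exact: jlin_fwd | exists F].
  + case=> hJ [F [hF e]]; subst H; exists F; split => //; split => //.
    exact: (@jlin_bwd K n d hd F hF hJ).
- move=> H; split.
  + by case=> F [[hF hJ] ->]; split; [exact: jinv_fwd | exists F].
  + case=> hJ [F [hF e]]; subst H; exists F; split => //; split => //.
    exact: (jinv_bwd hF hJ).
Qed.
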